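(* Fix $a>0$, a small constant $\delta>0$ and an integer $k>a/\delta$. For $n\in\mathbb{N}$ let $u_n(x)=n^{-a}(1-\cos 2\pi x)$, and let $v_n$ be constructed as follows: $\Lambda_n\subset[\frac14,\frac34]$ is an interval of length between $C^{-1}n^{-a/2}$ and $Cn^{-a/2}$; $\sigma=\frac12 n^{-a/2}$; $p_N$ is a real trigonometric polynomial (period $1$) of degree $N$ with $C^{-1}n^{\frac a2+\frac a{2k}}\le N\le Cn^{\frac a2+\frac a{2k}}$, such that $\max p_N\ge1$ is attained on $\Lambda_n$ and $|p_N(x)|\le\sigma$ on $[0,1]\setminus\Lambda_n$; $\tilde p_{2N}=e^{-2N}(p_N/\max p_N)^2$; $v_n=u_n\tilde p_{2N}$ ($C>0$ independent of $n$). Let $h_n(x,x')=\frac12(x-x')^2+u_n(x')+v_n(x')$. Let $J_n=\big[\exp(-n^{\frac a2+\frac\delta2}),\frac12\big]$. Then there is a constant $C'>0$ independent of $n$ such that for every minimal configuration $(x_i)_{i\in\mathbb{Z}}$ of $h_n$ with rotation symbol $\omega>0$, the set $\Sigma_n=\{i\in\mathbb{Z}: x_i\in J_n\}$ satisfies \[\#\Sigma_n\le C' n^{a+\frac\delta2}.\]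
   Context: A configuration $(x_i)_{i\in\mathbb{Z}}$ is minimal for $h$ if for all $i<j$ the segment $(x_i,\dots,x_j)$ minimizes $\sum_{i\le s<j}h(z_s,z_{s+1})$ among all $(z_i,\dots,z_j)$ with the same endpoints. Its frequency is $\lim_{n\to\infty}(x_{i+n}-x_i)/n$. The rotation symbol of a minimal configuration with irrational frequency $\omega$ is $\omega$; for frequency $p/q$ (lowest terms) it is $p/q+$, $p/q$ or $p/q-$ according as $x_{i+q}>x_i+p$, $=x_i+p$, or $<x_i+p$ for all $i$. ''Rotation symbol $\omega>0$'' means a rotation symbol with positive value. *)

(* Defs.v *)
From Stdlib Require Import Reals Lra ZArith List.
Open Scope R_scope.

Fixpoint fsum (f : nat -> R) (m : nat) : R :=
  match m with O => 0 | S m' => fsum f m' + f m' end.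

Definition seg_action (h : R -> R -> R) (x : Z -> R) (i : Z) (m : nat) : R :=
  fsum (fun t => h (x (i + Z.of_nat t)%Z) (x (i + Z.of_nat t + 1)%Z)) m.

Definition minimal_config (h : R -> R -> R) (x : Z -> R) : Prop :=
  forall (i : Z) (m : nat) (z : Z -> R),
    z i = x i -> z (i + Z.of_nat m)%Z = x (i + Z.of_nat m)%Z ->
    seg_action h x i m <= seg_action h z i m.

Definition has_frequency (x : Z -> R) (omega : R) : Prop :=
  forall i : Z, Un_cv (fun n : nat => (x (i + Z.of_nat n)%Z - x i) / INR n) omega.

Definition trig_poly_deg (p : R -> R) (N : nat) : Prop :=
  exists (c0 : R) (ac bc : nat -> R),
    (forall x, p x = c0 + fsum (fun j => ac (S j) * cos (2 * PI * INR (S j) * x)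
                                      + bc (S j) * sin (2 * PI * INR (S j) * x)) N)
    /\ (N = O \/ ac N <> 0 \/ bc N <> 0).

Definition u_n (a : R) (n : nat) (x : R) : R :=
  Rpower (INR n) (- a) * (1 - cos (2 * PI * x)).

Definition v_n (a : R) (n : nat) (N : nat) (p : R -> R) (M : R) (x : R) : R :=
  u_n a n x * (exp (- 2 * INR N) * (p x / M) ^ 2).

Definition h_n (a : R) (n : nat) (N : nat) (p : R -> R) (M : R) (x x' : R) : R :=
  / 2 * (x - x') ^ 2 + u_n a n x' + v_n a n N p M x'.

(* Admissible data for the construction of v_n at level n, with constant C:
   Lambda_n = [l, r] subset [1/4,3/4] of length in [C^{-1} n^{-a/2}, C n^{-a/2}];
   p trig. polynomial of degree N, C^{-1} n^{a/2+a/(2k)} <= N <= C n^{a/2+a/(2k)};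
   M = max p >= 1 attained on Lambda_n; |p| <= sigma = 1/2 n^{-a/2} on [0,1] \ Lambda_n. *)
Definition admissible (a : R) (k : nat) (C : R) (n : nat)
    (l r : R) (N : nat) (p : R -> R) (M : R) : Prop :=
  / 4 <= l /\ l <= r /\ r <= 3 / 4 /\
  / C * Rpower (INR n) (- a / 2) <= r - l /\ r - l <= C * Rpower (INR n) (- a / 2) /\
  trig_poly_deg p N /\
  / C * Rpower (INR n) (a / 2 + a / (2 * INR k)) <= INR N /\
  INR N <= C * Rpower (INR n) (a / 2 + a / (2 * INR k)) /\
  (forall y, p y <= M) /\ (exists x0, l <= x0 <= r /\ p x0 = M) /\ 1 <= M /\
  (forall y, 0 <= y <= 1 -> ~ (l <= y <= r) -> Rabs (p y) <= / 2 * Rpower (INR n) (- a / 2)).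

Definition in_J (a delta : R) (n : nat) (y : R) : Prop :=
  exp (- Rpower (INR n) (a / 2 + delta / 2)) <= y <= / 2.

(* Main.v *)
Require Import Defs.
From Stdlib Require Import Reals ZArith List.
From Stdlib Require Import Lra Lia Classical FunctionalExtensionality Bool.
From Coquelicot Require Import Coquelicot.
Open Scope R_scope.

Local Open Scope bool_scope.

Lemma fsum_le (f g : nat -> R) m : (forall t, (t < m)%nat -> f t <= g t) -> fsum f m <= fsum g m.
Proof. induction m; intros H; simpl. lra. assert (fsum f m <= fsum g m) by (apply IHm; intros; apply H; lia). specialize (H m ltac:(lia)). lra. Qed.

Lemma fsum_lt (f g : nat -> R) m : (forall t, (t < m)%nat -> f t <= g t) ->
  (exists t, (t < m)%nat /\ f t < g t) -> fsum f m < fsum g m.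
Proof. induction m; intros H [t [Ht1 Ht2]]; simpl. lia.
  destruct (Nat.eq_dec t m) as [->|Hne].
  - assert (fsum f m <= fsum g m) by (apply fsum_le; intros; apply H; lia). lra.
  - assert (fsum f m < fsum g m) by (apply IHm; [intros; apply H; lia| exists t; split; [lia|auto]]).
    specialize (H m ltac:(lia)). lra. Qed.

Lemma fsum_plus (f g : nat -> R) m : fsum (fun t => f t + g t) m = fsum f m + fsum g m.
Proof. induction m; simpl; lra. Qed.

Lemma fsum_ext (f g : nat -> R) m : (forall t, (t < m)%nat -> f t = g t) -> fsum f m = fsum g m.
Proof. induction m; intros H; simpl. auto. rewrite IHm by (intros; apply H; lia). rewrite (H m) by lia. auto. Qed.

Lemma fsum_split (f : nat -> R) m1 m2 : fsum f (m1 + m2) = fsum f m1 + fsum (fun t => f (m1 + t)%nat) m2.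
Proof. induction m2; simpl. rewrite Nat.add_0_r. lra. rewrite Nat.add_succ_r. simpl. rewrite IHm2. lra. Qed.

Lemma fsum_ge0 (f : nat -> R) m : (forall t, (t < m)%nat -> 0 <= f t) -> 0 <= fsum f m.
Proof. intros H. replace 0 with (fsum (fun _ => 0) m). apply fsum_le; auto. induction m; simpl; auto. rewrite IHm; try lra. intros; apply H; lia. Qed.

Lemma seg_split h x i K1 K2 : seg_action h x i (K1 + K2) =
  seg_action h x i K1 + seg_action h x (i + Z.of_nat K1)%Z K2.
Proof. unfold seg_action. rewrite fsum_split. f_equal. apply fsum_ext. intros t _.
  rewrite Nat2Z.inj_add. rewrite Z.add_assoc. reflexivity. Qed.

Lemma seg_ext h x z i K : (forall t, (t <= K)%nat -> x (i + Z.of_nat t)%Z = z (i + Z.of_nat t)%Z) ->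
  seg_action h x i K = seg_action h z i K.
Proof. intros H. unfold seg_action. apply fsum_ext. intros t Ht.
  rewrite (H t) by lia. replace (i + Z.of_nat t + 1)%Z with (i + Z.of_nat (S t))%Z by lia.
  rewrite (H (S t)) by lia. auto. Qed.

Definition WM h (x : Z -> R) i K := forall z : Z -> R, z i = x i -> z (i + Z.of_nat K)%Z = x (i + Z.of_nat K)%Z ->
  seg_action h x i K <= seg_action h z i K.

Lemma min_WM h x : minimal_config h x -> forall i K, WM h x i K.
Proof. intros H i K z H1 H2. apply H; auto. Qed.

Lemma WM_sub h x i K1 K2 K3 : WM h x i (K1 + K2 + K3) -> WM h x (i + Z.of_nat K1)%Z K2.
Proof. intros H z Hz1 Hz2.
  set (z' := fun j => if Z.ltb (i + Z.of_nat K1) j && Z.ltb j (i + Z.of_nat K1 + Z.of_nat K2) then z j else x j).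
  assert (E : seg_action h x i (K1 + K2 + K3) <= seg_action h z' i (K1 + K2 + K3)).
  { apply H; unfold z'.
    - replace (Z.ltb (i + Z.of_nat K1) i) with false. reflexivity. symmetry; apply Z.ltb_ge; lia.
    - replace (Z.ltb (i + Z.of_nat (K1+K2+K3)) (i + Z.of_nat K1 + Z.of_nat K2)) with false.
      rewrite andb_false_r. reflexivity. symmetry; apply Z.ltb_ge; lia. }
  rewrite !seg_split in E.
  assert (E1 : seg_action h x i K1 = seg_action h z' i K1).
  { apply seg_ext. intros t Ht. unfold z'. replace (Z.ltb (i + Z.of_nat K1) (i + Z.of_nat t)) with false; auto.
    symmetry; apply Z.ltb_ge; lia. }
  assert (E3 : seg_action h x (i + Z.of_nat K1 + Z.of_nat K2)%Z K3 = seg_action h z' (i + Z.of_nat K1 + Z.of_nat K2)%Z K3).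
  { apply seg_ext. intros t Ht. unfold z'. replace (Z.ltb (i + Z.of_nat K1 + Z.of_nat K2 + Z.of_nat t) (i + Z.of_nat K1 + Z.of_nat K2)) with false.
    rewrite andb_false_r; auto. symmetry; apply Z.ltb_ge; lia. }
  assert (E2 : seg_action h z' (i + Z.of_nat K1)%Z K2 = seg_action h z (i + Z.of_nat K1)%Z K2).
  { apply seg_ext. intros t Ht. unfold z'.
    destruct (Z.ltb (i + Z.of_nat K1) (i + Z.of_nat K1 + Z.of_nat t) && Z.ltb (i + Z.of_nat K1 + Z.of_nat t) (i + Z.of_nat K1 + Z.of_nat K2)) eqn:Eb.
    reflexivity.
    apply andb_false_iff in Eb. destruct Eb as [Eb|Eb]; apply Z.ltb_ge in Eb.
    - assert (t = 0%nat) by lia. subst. simpl. rewrite Z.add_0_r. auto.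
    - assert (t = K2) by lia. subst. auto. }
  rewrite Nat2Z.inj_add in E. rewrite Z.add_assoc in E.
  rewrite <- E1, <- E3, E2 in E. lra. Qed.

Local Close Scope bool_scope.

Definition HW (W : R -> R) (x x' : R) := / 2 * (x - x') ^ 2 + W x'.

Definition OPM W (x : Z -> R) (j : Z) := forall t,
  HW W (x (j-1)%Z) (x j) + HW W (x j) (x (j+1)%Z) <= HW W (x (j-1)%Z) t + HW W t (x (j+1)%Z).

Lemma WM_OPM W x j : WM (HW W) x (j-1)%Z 2 -> OPM W x j.
Proof. intros H t.
  set (z := fun k => if Z.eq_dec k j then t else x k).
  assert (E := H z). unfold seg_action in E. simpl in E.
  replace (j - 1 + 0)%Z with (j-1)%Z in E by lia.
  replace (j - 1 + 0 + 1)%Z with j in E by lia.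
  replace (j - 1 + 1)%Z with j in E by lia.
  replace (j - 1 + 1 + 1)%Z with (j+1)%Z in E by lia.
  replace (j - 1 + 2)%Z with (j+1)%Z in E by lia.
  unfold z in E. destruct (Z.eq_dec j j); [|congruence].
  destruct (Z.eq_dec (j-1) j); [lia|]. destruct (Z.eq_dec (j+1) j); [lia|].
  assert (E' := E eq_refl eq_refl). lra. Qed.

Lemma EL W l x j : OPM W x j -> derivable_pt_lim W (x j) l ->
  (x j - x (j-1)%Z) + l + (x j - x (j+1)%Z) = 0.
Proof. intros H Hl.
  set (a := x (j-1)%Z) in *. set (b := x (j+1)%Z) in *. set (c := x j) in *.
  set (G := fun t => HW W a t + HW W t b).
  assert (HG : derivable_pt_lim G c ((c - a) + l + (c - b))).
  { apply is_derive_Reals. apply is_derive_Reals in Hl. unfold G, HW.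
    evar (L : R). replace ((c - a) + l + (c - b)) with L.
    apply @is_derive_plus. apply @is_derive_plus.
    - auto_derive. auto. reflexivity.
    - exact Hl.
    - apply @is_derive_plus. auto_derive. auto. reflexivity. apply is_derive_const.
    - unfold L. rewrite !plus_zero_r. unfold plus; simpl. field. }
  set (pr := exist (fun l0 => derivable_pt_abs G c l0) _ HG : derivable_pt G c).
  assert (D := deriv_minimum G (c - 1) (c + 1) c pr ltac:(lra) ltac:(lra)).
  simpl in D. apply D. intros t _ _. unfold G. apply H. Qed.

Section Abs.
Variable W : R -> R.
Hypothesis HWd : forall c, exists l, derivable_pt_lim W c l.

Lemma EL_fwd f g j : OPM W f j -> OPM W g j -> f j = g j -> f (j-1)%Z = g (j-1)%Z -> f (j+1)%Z = g (j+1)%Z.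
Proof. intros Hf Hg E1 E2. destruct (HWd (f j)) as [l Hl].
  assert (A1 := EL W l f j Hf Hl). rewrite E1 in Hl. assert (A2 := EL W l g j Hg Hl). lra. Qed.

Lemma EL_bwd f g j : OPM W f j -> OPM W g j -> f j = g j -> f (j+1)%Z = g (j+1)%Z -> f (j-1)%Z = g (j-1)%Z.
Proof. intros Hf Hg E1 E2. destruct (HWd (f j)) as [l Hl].
  assert (A1 := EL W l f j Hf Hl). rewrite E1 in Hl. assert (A2 := EL W l g j Hg Hl). lra. Qed.

Lemma prop_window f g i0 K :
  (forall s, (0 < s < K)%nat -> OPM W f (i0 + Z.of_nat s)%Z /\ OPM W g (i0 + Z.of_nat s)%Z) ->
  forall s0, (s0 + 1 <= K)%nat -> f (i0 + Z.of_nat s0)%Z = g (i0 + Z.of_nat s0)%Z ->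
  f (i0 + Z.of_nat (s0 + 1))%Z = g (i0 + Z.of_nat (s0+1))%Z ->
  forall s, (s <= K)%nat -> f (i0 + Z.of_nat s)%Z = g (i0 + Z.of_nat s)%Z.
Proof. intros HO s0 Hs0 E0 E1.
  assert (Fw : forall d, (s0 + d + 1 <= K)%nat -> f (i0 + Z.of_nat (s0+d))%Z = g (i0 + Z.of_nat (s0+d))%Z /\
     f (i0 + Z.of_nat (s0+d+1))%Z = g (i0 + Z.of_nat (s0+d+1))%Z).
  { induction d; intros Hd.
    - rewrite Nat.add_0_r. auto.
    - destruct IHd as [IH1 IH2]. lia. split.
      + replace (s0 + S d)%nat with (s0 + d + 1)%nat by lia. auto.
      + destruct (HO (s0 + d + 1)%nat ltac:(lia)) as [Hf Hg].
        assert (X := EL_fwd f g _ Hf Hg IH2).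
        replace (i0 + Z.of_nat (s0 + d + 1) - 1)%Z with (i0 + Z.of_nat (s0+d))%Z in X by lia.
        replace (i0 + Z.of_nat (s0 + d + 1) + 1)%Z with (i0 + Z.of_nat (s0+ S d + 1))%Z in X by lia.
        auto. }
  assert (Bw : forall d, (d <= s0)%nat -> f (i0 + Z.of_nat (s0-d))%Z = g (i0 + Z.of_nat (s0-d))%Z /\
     f (i0 + Z.of_nat (s0-d+1))%Z = g (i0 + Z.of_nat (s0-d+1))%Z).
  { induction d; intros Hd.
    - rewrite Nat.sub_0_r. auto.
    - destruct IHd as [IH1 IH2]. lia. split.
      + destruct (HO (s0 - d)%nat ltac:(lia)) as [Hf Hg].
        assert (X := EL_bwd f g _ Hf Hg IH1).
        replace (i0 + Z.of_nat (s0 - d) + 1)%Z with (i0 + Z.of_nat (s0-d+1))%Z in X by lia.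
        replace (i0 + Z.of_nat (s0 - d) - 1)%Z with (i0 + Z.of_nat (s0 - S d))%Z in X by lia.
        auto.
      + replace (s0 - S d + 1)%nat with (s0 - d)%nat by lia. auto. }
  intros s Hs. destruct (le_lt_dec s0 s).
  - destruct (Nat.eq_dec s K).
    + destruct (Fw (s - s0 - 1)%nat ltac:(lia)) as [_ X]. replace (s0 + (s - s0 - 1) + 1)%nat with s in X by lia. auto.
    + destruct (Fw (s - s0)%nat ltac:(lia)) as [X _]. replace (s0 + (s - s0))%nat with s in X by lia. auto.
  - destruct (Bw (s0 - s)%nat ltac:(lia)) as [X _]. replace (s0 - (s0 - s))%nat with s in X by lia. auto.
Qed.

Lemma step_ineq a b a' b' :
  HW W (Rmin a a') (Rmin b b') + HW W (Rmax a a') (Rmax b b') <= HW W a b + HW W a' b' /\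
  ((a - a') * (b - b') < 0 ->
  HW W (Rmin a a') (Rmin b b') + HW W (Rmax a a') (Rmax b b') < HW W a b + HW W a' b').
Proof. unfold HW, Rmin, Rmax.
  destruct (Rle_dec a a'), (Rle_dec b b'); split; intros; try nra. Qed.

End Abs.

Lemma shift_min h x : minimal_config h x -> minimal_config h (fun j => x (j + 1)%Z).
Proof. intros H i m z E1 E2.
  assert (X := H (i+1)%Z m (fun j => z (j - 1)%Z)). simpl in X.
  replace (i + 1 - 1)%Z with i in X by lia.
  replace (i + 1 + Z.of_nat m - 1)%Z with (i + Z.of_nat m)%Z in X by lia.
  replace (i + 1 + Z.of_nat m)%Z with (i + Z.of_nat m + 1)%Z in X by lia.
  specialize (X E1 E2). unfold seg_action in *.
  replace (fsum (fun t => h (x (i + Z.of_nat t + 1)%Z) (x (i + Z.of_nat t + 1 + 1)%Z)) m)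
    with (fsum (fun t => h (x (i + 1 + Z.of_nat t)%Z) (x (i + 1 + Z.of_nat t + 1)%Z)) m).
  replace (fsum (fun t => h (z (i + Z.of_nat t)%Z) (z (i + Z.of_nat t + 1)%Z)) m)
    with (fsum (fun t => h (z (i + 1 + Z.of_nat t - 1)%Z) (z (i + 1 + Z.of_nat t + 1 - 1)%Z)) m). auto.
  apply fsum_ext; intros; f_equal; f_equal; lia.
  apply fsum_ext; intros; f_equal; f_equal; lia. Qed.

Section Abs2.
Variable W : R -> R.
Hypothesis HWd : forall c, exists l, derivable_pt_lim W c l.

Lemma lemA x y i0 K : minimal_config (HW W) x -> minimal_config (HW W) y -> (1 <= K)%nat ->
  x i0 <= y i0 -> x (i0 + Z.of_nat K)%Z <= y (i0 + Z.of_nat K)%Z ->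
  (forall s, (s <= K)%nat -> x (i0 + Z.of_nat s)%Z <= y (i0 + Z.of_nat s)%Z) \/
  (x i0 = y i0 /\ forall s, (s <= K)%nat -> y (i0 + Z.of_nat s)%Z <= x (i0 + Z.of_nat s)%Z).
Proof. intros Hx Hy HK H0 HKe.
  set (m := fun j => Rmin (x j) (y j)). set (Mx := fun j => Rmax (x j) (y j)).
  set (D := fun s : nat => y (i0 + Z.of_nat s)%Z - x (i0 + Z.of_nat s)%Z).
  assert (Am : seg_action (HW W) x i0 K <= seg_action (HW W) m i0 K).
  { apply Hx; unfold m; [apply Rmin_left|apply Rmin_left]; auto. }
  assert (AM : seg_action (HW W) y i0 K <= seg_action (HW W) Mx i0 K).
  { apply Hy; unfold Mx; [apply Rmax_right|apply Rmax_right]; auto. }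
  assert (Sum : seg_action (HW W) m i0 K + seg_action (HW W) Mx i0 K <=
                seg_action (HW W) x i0 K + seg_action (HW W) y i0 K).
  { unfold seg_action. rewrite <- !fsum_plus. apply fsum_le. intros t _. unfold m, Mx.
    apply step_ineq. }
  assert (NoCross : forall s, (s < K)%nat -> 0 <= D s * D (S s)).
  { intros s Hs. destruct (Rle_or_lt 0 (D s * D (S s))) as [|Hlt]; auto. exfalso.
    assert (Sum' : seg_action (HW W) m i0 K + seg_action (HW W) Mx i0 K <
                seg_action (HW W) x i0 K + seg_action (HW W) y i0 K).
    { unfold seg_action. rewrite <- !fsum_plus. apply fsum_lt. intros t _. unfold m, Mx.
      apply step_ineq. exists s. split; auto. unfold m, Mx. apply step_ineq.
      unfold D in Hlt. replace (i0 + Z.of_nat (S s))%Z with (i0 + Z.of_nat s + 1)%Z in Hlt by lia. nra. }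
    lra. }
  assert (mWM : WM (HW W) m i0 K).
  { intros z E1 E2. assert (seg_action (HW W) x i0 K <= seg_action (HW W) z i0 K).
    { apply Hx. rewrite E1. unfold m; apply Rmin_left; auto. rewrite E2. unfold m; apply Rmin_left; auto. }
    lra. }
  assert (mOPM : forall s, (0 < s < K)%nat -> OPM W m (i0 + Z.of_nat s)%Z).
  { intros s Hs. replace (i0 + Z.of_nat s)%Z with ((i0 + Z.of_nat (s-1)) + 1)%Z by lia.
    apply WM_OPM. replace (i0 + Z.of_nat (s - 1) + 1 - 1)%Z with (i0 + Z.of_nat (s-1))%Z by lia.
    apply (WM_sub _ _ _ (s-1) 2 (K - s - 1)). replace (s - 1 + 2 + (K - s - 1))%nat with K by lia. auto. }
  assert (gOPM : forall z, minimal_config (HW W) z -> forall j, OPM W z j).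
  { intros z Hz j. apply WM_OPM. apply min_WM; auto. }
  destruct (classic (exists s, (s < K)%nat /\ 0 <= D s /\ 0 <= D (S s))) as [[s [Hs [D1 D2]]]|Hno].
  - left. intros s' Hs'.
    assert (E := prop_window W HWd m x i0 K ltac:(intros; split; [apply mOPM; auto| apply gOPM; auto]) s
      ltac:(lia)).
    assert (Xe : m (i0 + Z.of_nat s')%Z = x (i0 + Z.of_nat s')%Z).
    { apply E; auto. unfold m; apply Rmin_left; unfold D in D1; lra.
      unfold m; apply Rmin_left; unfold D in D2; replace (s+1)%nat with (S s) by lia; lra. }
    unfold m in Xe. rewrite <- Xe. apply Rmin_r.
  - assert (K1 : (2 <= K)%nat).
    { destruct (Nat.eq_dec K 1); [|lia]. exfalso. apply Hno. exists 0%nat. split; [lia|].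
      unfold D. simpl. rewrite Z.add_0_r. split; [lra|]. subst K. simpl in HKe. lra. }
    assert (D0 : 0 <= D 0%nat) by (unfold D; simpl; rewrite Z.add_0_r; lra).
    assert (D1 : D 1%nat < 0).
    { destruct (Rlt_or_le (D 1%nat) 0); auto. exfalso. apply Hno. exists 0%nat. split; [lia|]. auto. }
    assert (D2 : D 2%nat <= 0).
    { assert (X := NoCross 1%nat ltac:(lia)). nra. }
    assert (D00 : D 0%nat = 0). { assert (X := NoCross 0%nat ltac:(lia)). nra. }
    right. split. unfold D in D00. simpl in D00. rewrite Z.add_0_r in D00. lra.
    intros s' Hs'.
    assert (E := prop_window W HWd m y i0 K ltac:(intros; split; [apply mOPM; auto| apply gOPM; auto]) 1%nat
      ltac:(lia)).
    assert (Xe : m (i0 + Z.of_nat s')%Z = y (i0 + Z.of_nat s')%Z).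
    { apply E; auto. unfold m; apply Rmin_right; unfold D in D1; lra.
      unfold m; apply Rmin_right; unfold D in D2; simpl; simpl in D2; lra. }
    unfold m in Xe. rewrite <- Xe. apply Rmin_l.
Qed.
End Abs2.

Section Abs3.
Variable W : R -> R.
Hypothesis HWd : forall c, exists l, derivable_pt_lim W c l.

Lemma gOPM z : minimal_config (HW W) z -> forall j, OPM W z j.
Proof. intros Hz j. apply WM_OPM. apply min_WM; auto. Qed.

Lemma prop_global f g : minimal_config (HW W) f -> minimal_config (HW W) g ->
  forall j, f j = g j -> f (j+1)%Z = g (j+1)%Z -> forall k, f k = g k.
Proof. intros Hf Hg j E1 E2 k.
  set (i0 := (Z.min k j - 1)%Z). set (K := Z.to_nat (Z.max k (j+1) + 1 - i0)).
  assert (X := prop_window W HWd f g i0 K ltac:(intros; split; apply gOPM; auto) (Z.to_nat (j - i0))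
     ltac:(lia)).
  replace (i0 + Z.of_nat (Z.to_nat (j - i0)))%Z with j in X by lia.
  replace (i0 + Z.of_nat (Z.to_nat (j - i0) + 1))%Z with (j+1)%Z in X by lia.
  specialize (X E1 E2 (Z.to_nat (k - i0)) ltac:(lia)).
  replace (i0 + Z.of_nat (Z.to_nat (k - i0)))%Z with k in X by lia. auto. Qed.

Variable x : Z -> R.
Hypothesis Hx : minimal_config (HW W) x.
Hypothesis Hpos : forall k, exists j, (k < j)%Z /\ x j < x (j+1)%Z.

Let y := fun j => x (j + 1)%Z.
Let Hy : minimal_config (HW W) y := shift_min _ x Hx.

Lemma lemB i0 j0 : (i0 < j0)%Z -> x i0 <= x (i0+1)%Z -> x j0 <= x (j0+1)%Z ->
  forall k, (i0 <= k <= j0)%Z -> x k <= x (k+1)%Z.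
Proof. intros Hij H0 H1.
  set (K := Z.to_nat (j0 - i0)).
  assert (Ej : j0 = (i0 + Z.of_nat K)%Z) by (unfold K; lia).
  assert (Gen : forall i1 K1, (1 <= K1)%nat -> x i1 <= y i1 -> x (i1 + Z.of_nat K1)%Z <= y (i1 + Z.of_nat K1)%Z ->
     (forall s, (s <= K1)%nat -> x (i1 + Z.of_nat s)%Z <= y (i1 + Z.of_nat s)%Z) \/
     (x i1 = y i1 /\ forall s, (s <= K1)%nat -> y (i1 + Z.of_nat s)%Z <= x (i1 + Z.of_nat s)%Z)).
  { intros. apply (lemA W HWd); auto. }
  assert (Conv : (forall s, (s <= K)%nat -> x (i0 + Z.of_nat s)%Z <= y (i0 + Z.of_nat s)%Z) ->
     forall k, (i0 <= k <= j0)%Z -> x k <= x (k+1)%Z).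
  { intros HH k Hk. assert (X := HH (Z.to_nat (k - i0)) ltac:(lia)).
    replace (i0 + Z.of_nat (Z.to_nat (k - i0)))%Z with k in X by lia. auto. }
  apply Conv.
  destruct (Gen i0 K ltac:(lia) H0 ltac:(rewrite <- Ej; auto)) as [A|[A0 A]]; auto.
  assert (Hi1 : y (i0 + 1)%Z <= x (i0+1)%Z).
  { assert (X := A 1%nat ltac:(lia)). simpl in X. replace (i0 + Z.pos 1)%Z with (i0+1)%Z in X by lia. auto. }
  unfold y in A0, Hi1.
  destruct (HWd (x i0)) as [l Hl].
  assert (E0 := EL W l x i0 (gOPM x Hx i0) Hl).
  rewrite A0 in Hl. assert (E1 := EL W l x (i0+1)%Z (gOPM x Hx (i0+1)) Hl).
  replace (i0 + 1 - 1)%Z with i0 in E1 by lia.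
  replace (i0 + 1 + 1)%Z with (i0 + 2)%Z in E1 by lia. replace (i0 + 1 + 1)%Z with (i0 + 2)%Z in Hi1 by lia.
  assert (Hm : x (i0 - 1)%Z <= y (i0 - 1)%Z).
  { unfold y. replace (i0 - 1 + 1)%Z with i0 by lia. lra. }
  destruct (Gen (i0 - 1)%Z (S K) ltac:(lia) Hm ltac:(replace (i0 - 1 + Z.of_nat (S K))%Z with j0 by lia; auto))
    as [B|[B0 B]].
  - intros s Hs. assert (X := B (S s) ltac:(lia)). replace (i0 - 1 + Z.of_nat (S s))%Z with (i0 + Z.of_nat s)%Z in X by lia. auto.
  - exfalso. unfold y in B0. replace (i0 - 1 + 1)%Z with i0 in B0 by lia.
    assert (E2 : x (i0 + 1)%Z = x (i0 + 2)%Z) by lra.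
    assert (All := prop_global x y Hx Hy i0 ltac:(unfold y; lra) ltac:(unfold y; replace (i0+1+1)%Z with (i0+2)%Z by lia; lra)).
    destruct (Hpos 0%Z) as [j [_ Hj]]. rewrite (All j) in Hj. unfold y in Hj. lra.
Qed.

Lemma mono_fwd i : x i <= x (i+1)%Z -> forall k, (i <= k)%Z -> x k <= x (k+1)%Z.
Proof. intros H k Hk. destruct (Hpos k) as [j [Hj1 Hj2]].
  apply (lemB i j); auto; try lia; lra. Qed.

End Abs3.

Section Hyper.
Variables (z : nat -> R) (kap : R) (K : nat).
Hypothesis Hk : 0 < kap.
Hypothesis Hrec : forall t, (1 <= t)%nat -> (t < K)%nat -> (z (S t) - z t) - (z t - z (t-1)%nat) >= kap * z t.

Lemma block t0 j : 0 <= z t0 -> z t0 <= z (S t0) -> (t0 + j <= K)%nat ->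
  z (t0 + j)%nat >= z t0 * (1 + kap * INR j * (INR j - 1) / 2) /\
  ((t0 + j < K)%nat -> z (S (t0 + j)) - z (t0 + j)%nat >= INR j * kap * z t0).
Proof. intros Hz0 Hq0. induction j; intros Hj.
  - rewrite Nat.add_0_r. simpl. split. lra. intros _. lra.
  - destruct IHj as [IH1 IH2]. lia.
    assert (Hq := IH2 ltac:(lia)).
    rewrite S_INR. replace (t0 + S j)%nat with (S (t0 + j)) by lia.
    assert (Hzj : z (S (t0+j)) >= z t0 * (1 + kap * (INR j + 1) * (INR j + 1 - 1) / 2)).
    { replace (z t0 * (1 + kap * (INR j + 1) * (INR j + 1 - 1) / 2)) with
        (z t0 * (1 + kap * INR j * (INR j - 1) / 2) + INR j * kap * z t0) by field. lra. }
    split; auto. intros Hlt.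
    assert (R1 := Hrec (S (t0+j)) ltac:(lia) Hlt). replace (S (t0 + j) - 1)%nat with (t0 + j)%nat in R1 by lia.
    assert (0 <= INR j) by apply pos_INR.
    assert (0 <= kap * (INR j + 1) * (INR j + 1 - 1) / 2).
    { replace (INR j + 1 - 1) with (INR j) by ring. apply Rmult_le_pos; [|lra]. apply Rmult_le_pos; [|auto]. nra. }
    assert (z (S (t0 + j)) >= z t0) by nra.
    assert (kap * z (S (t0 + j)) >= kap * z t0) by nra.
    replace ((INR j + 1) * kap * z t0) with (INR j * kap * z t0 + kap * z t0) by ring. lra.
Qed.

Variable m : nat.
Hypothesis Hm : (1 <= m)%nat.
Hypothesis Hkm : 2 <= kap * INR m * (INR m - 1) / 2.

Lemma chain j : 0 <= z 0%nat -> z 0%nat <= z 1%nat -> (j * m <= K)%nat ->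
  z (j * m)%nat >= exp (INR j) * z 0%nat /\ ((j * m < K)%nat -> z (j*m)%nat <= z (S (j*m))).
Proof. intros Hz0 Hq0. induction j; intros Hj.
  - simpl. rewrite exp_0. split. lra. intros; auto.
  - destruct IHj as [IH1 IH2]. simpl in Hj. lia.
    assert (Hlt : (j * m < K)%nat) by (simpl in Hj; lia).
    assert (Hq := IH2 Hlt).
    assert (Hpos : 0 <= z (j*m)%nat). { assert (0 < exp (INR j)) by apply exp_pos. nra. }
    destruct (block (j*m) m Hpos Hq ltac:(simpl in Hj; lia)) as [B1 B2].
    replace (S j * m)%nat with (j * m + m)%nat by lia.
    assert (E3 : exp 1 <= 3) by apply exp_le_3.
    split.
    + rewrite S_INR, exp_plus. assert (0 < exp (INR j)) by apply exp_pos.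
      assert (exp 1 * z (j*m)%nat <= 3 * z (j*m)%nat) by nra.
      assert (z (j*m+m)%nat >= 3 * z (j*m)%nat) by nra.
      assert (exp (INR j) * exp 1 * z 0%nat <= exp 1 * z (j*m)%nat).
      { assert (0 < exp 1) by apply exp_pos. nra. }
      lra.
    + intros Hl. assert (B := B2 Hl). assert (0 <= INR m) by apply pos_INR.
      assert (0 <= INR m * kap * z (j * m)%nat) by (apply Rmult_le_pos; [apply Rmult_le_pos|]; lra). lra.
Qed.

Lemma hyper P : exp (- P) <= z 0%nat -> z 0%nat <= z 1%nat -> (forall t, (t <= K)%nat -> z t <= 1) ->
  INR K < (P + 1) * INR m.
Proof. intros He Hq Hb.
  set (j := (K / m)%nat).
  assert (Hjm : (j * m <= K)%nat). { unfold j. rewrite Nat.mul_comm. apply Nat.Div0.mul_div_le. }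
  assert (Hz0 : 0 <= z 0%nat). { assert (0 < exp (-P)) by apply exp_pos. lra. }
  destruct (chain j Hz0 Hq Hjm) as [C _].
  assert (Hb' := Hb _ Hjm).
  assert (exp (INR j) * exp (-P) <= 1). { assert (0 < exp (INR j)) by apply exp_pos. nra. }
  rewrite <- exp_plus in H. assert (INR j + - P <= 0).
  { destruct (Rle_or_lt (INR j + - P) 0); auto. assert (1 < exp (INR j + -P)).
    { rewrite <- exp_0. apply exp_increasing. auto. } lra. }
  assert (HK : (K < (j + 1) * m)%nat).
  { unfold j. assert (X := Nat.div_mod K m ltac:(lia)). assert (Y := Nat.mod_upper_bound K m ltac:(lia)). nia. }
  apply lt_INR in HK. rewrite mult_INR, plus_INR in HK. simpl in HK.
  assert (0 < INR m) by (apply lt_0_INR; lia). nra.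
Qed.
End Hyper.

Lemma fsum_two_ends (f : nat -> R) K' : (forall t, (0 < t < K' + 1)%nat -> f t = 0) ->
  fsum f (K' + 2) = f 0%nat + f (K' + 1)%nat.
Proof. induction K'; intros H. simpl. lra.
  replace (S K' + 2)%nat with (S (K' + 2)) by lia. simpl fsum. rewrite IHK' by (intros; apply H; lia).
  rewrite (H (K'+1)%nat) by lia. replace (K' + 2)%nat with (S K' + 1)%nat by lia. lra. Qed.

Lemma fsum_const_ge (f : nat -> R) c K : (forall t, (t < K)%nat -> c <= f t) -> INR K * c <= fsum f K.
Proof. induction K; intros H. simpl. lra. rewrite S_INR. simpl.
  assert (INR K * c <= fsum f K) by (apply IHK; intros; apply H; lia). specialize (H K ltac:(lia)). lra. Qed.

Lemma run_len W x c eta i K : minimal_config (HW W) x -> (forall y, 0 <= W y) -> W 0 = 0 -> 0 < c ->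
  (forall y, eta <= y <= / 2 -> c <= W y) -> 0 <= eta ->
  (forall s, (s <= K)%nat -> eta <= x (i + Z.of_nat s)%Z <= / 2) -> (INR K - 1) * c <= / 4.
Proof. intros Hx HW0 HW00 Hc HWc Heta Hs.
  destruct (le_lt_dec K 1). { assert (INR K <= 1) by (replace 1 with (INR 1) by auto; apply le_INR; auto). nra. }
  set (K' := (K - 2)%nat). assert (EK : K = (K' + 2)%nat) by (unfold K'; lia).
  set (z := fun j => if andb (Z.ltb i j) (Z.ltb j (i + Z.of_nat K)) then 0 else x j).
  assert (Hz1 : z i = x i). { unfold z. rewrite (proj2 (Z.ltb_ge i i)) by lia. reflexivity. }
  assert (Hz2 : z (i + Z.of_nat K)%Z = x (i + Z.of_nat K)%Z).
  { unfold z. rewrite (proj2 (Z.ltb_ge (i + Z.of_nat K) (i + Z.of_nat K))) by lia. rewrite Bool.andb_false_r. reflexivity. }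
  assert (A := Hx i K z Hz1 Hz2).
  assert (Az : seg_action (HW W) z i K = / 2 * (x i)^2 + / 2 * (x (i + Z.of_nat K)%Z)^2 + W (x (i + Z.of_nat K)%Z)).
  { unfold seg_action. rewrite EK. rewrite fsum_two_ends.
    - simpl. rewrite Z.add_0_r. rewrite Hz1.
      replace (i + Z.of_nat (K' + 1) + 1)%Z with (i + Z.of_nat K)%Z by lia. rewrite Hz2.
      unfold z. rewrite (proj2 (Z.ltb_lt i (i+1))) by lia. rewrite (proj2 (Z.ltb_lt (i+1) (i + Z.of_nat K))) by lia.
      rewrite (proj2 (Z.ltb_lt i (i + Z.of_nat (K'+1)))) by lia.
      rewrite (proj2 (Z.ltb_lt (i + Z.of_nat (K'+1)) (i + Z.of_nat K))) by lia. simpl. unfold HW.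
      rewrite HW00. rewrite <- EK. ring.
    - intros t Ht. unfold z. rewrite (proj2 (Z.ltb_lt i (i + Z.of_nat t))) by lia.
      rewrite (proj2 (Z.ltb_lt (i + Z.of_nat t) (i + Z.of_nat K))) by lia.
      rewrite (proj2 (Z.ltb_lt i (i + Z.of_nat t + 1))) by lia.
      rewrite (proj2 (Z.ltb_lt (i + Z.of_nat t + 1) (i + Z.of_nat K))) by lia. simpl. unfold HW. rewrite HW00. lra. }
  assert (Ax : INR (K' + 1) * c + W (x (i + Z.of_nat K)%Z) <= seg_action (HW W) x i K).
  { unfold seg_action. rewrite EK. replace (K' + 2)%nat with (S (K'+1)) by lia. simpl fsum.
    assert (INR (K'+1) * c <= fsum (fun t => HW W (x (i + Z.of_nat t)%Z) (x (i + Z.of_nat t + 1)%Z)) (K' + 1)).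
    { apply fsum_const_ge. intros t Ht. unfold HW.
      assert (X := Hs (S t) ltac:(lia)). replace (i + Z.of_nat (S t))%Z with (i + Z.of_nat t + 1)%Z in X by lia.
      assert (c <= W (x (i + Z.of_nat t + 1)%Z)) by (apply HWc; auto).
      assert (0 <= (x (i + Z.of_nat t)%Z - x (i + Z.of_nat t + 1)%Z) ^ 2) by apply pow2_ge_0. lra. }
    unfold HW at 2. replace (i + Z.of_nat (K'+1) + 1)%Z with (i + Z.of_nat K)%Z by lia.
    replace (i + Z.of_nat (S (K' + 1)))%Z with (i + Z.of_nat K)%Z by lia.
    match goal with |- context [(?a - ?b) ^ 2] => assert (0 <= (a - b)^2) by apply pow2_ge_0 end. lra. }
  assert (X1 := Hs 0%nat ltac:(lia)). simpl in X1. rewrite Z.add_0_r in X1.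
  assert (X2 := Hs K ltac:(lia)).
  rewrite EK in Ax. replace (INR (K'+1)) with (INR K - 1) in Ax.
  2:{ rewrite EK. rewrite !plus_INR. simpl. lra. }
  rewrite <- EK in Ax. nra.
Qed.

Lemma sa1 z : sin_approx z 1 = z - z^3/6.
Proof. unfold sin_approx, sin_term. simpl. unfold Rdiv. simpl. field. Qed.
Lemma sa2 z : sin_approx z 2 = z - z^3/6 + z^5/120.
Proof. unfold sin_approx, sin_term. simpl. unfold Rdiv. simpl. field. Qed.

Lemma sin_ge_half z : 0 <= z <= 3/2 -> z / 2 <= sin z.
Proof. intros Hz. destruct (pre_sin_bound z 0 ltac:(lra) ltac:(lra)) as [H _].
  simpl in H. rewrite sa1 in H. assert (z^3 <= 3 * z) by nra. lra. Qed.

Lemma sin_le_id z : 0 <= z <= 4 -> sin z <= z.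
Proof. intros Hz. destruct (pre_sin_bound z 0 ltac:(lra) ltac:(lra)) as [_ H].
  simpl in H. rewrite sa2 in H. assert (0 <= z^3) by (apply pow_le; lra). assert (z^5 <= 16 * z^3).
  { replace (z^5) with (z^3 * z^2) by ring.
    assert (z^2 <= 16) by nra. nra. }
  lra. Qed.

Lemma PI_gt3 : 3 < PI.
Proof. assert (X := PI2_3_2). lra. Qed.

Lemma one_minus_cos_le z : 0 <= z <= 2 -> 1 - cos z <= z^2 / 2.
Proof. intros Hz. replace z with (2 * (z/2)) at 1 by field. rewrite cos_2a_sin.
  assert (0 <= sin (z/2)) by (apply sin_ge_0; assert (X := PI_gt3); lra).
  assert (sin (z/2) <= z/2) by (apply sin_le_id; lra). nra. Qed.

Lemma ex_derive_fsum (F : nat -> R -> R) m y : (forall j, ex_derive (F j) y) ->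
  ex_derive (fun x => fsum (fun j => F j x) m) y.
Proof. intros H. induction m; simpl.
  - apply ex_derive_const.
  - apply (ex_derive_plus (fun x => fsum (fun j => F j x) m) (F m)); auto. Qed.

Lemma trig_ex_derive p N : trig_poly_deg p N -> forall y, ex_derive p y.
Proof. intros [c0 [ac [bc [Hp _]]]] y.
  assert (E : p = fun x => c0 + fsum (fun j => ac (S j) * cos (2 * PI * INR (S j) * x)
                                      + bc (S j) * sin (2 * PI * INR (S j) * x)) N).
  { apply functional_extensionality; auto. }
  rewrite E. apply (ex_derive_plus (fun _ => c0)). apply ex_derive_const.
  apply (ex_derive_fsum (fun j x => ac (S j) * cos (2 * PI * INR (S j) * x) + bc (S j) * sin (2 * PI * INR (S j) * x))).
  intros j. auto_derive. auto. Qed.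

Section Conc.
Variables (a : R) (n N : nat) (p : R -> R) (M : R).
Hypothesis Ha : 0 < a.
Hypothesis Hn : (0 < n)%nat.
Hypothesis HN : (1 <= N)%nat.
Hypothesis HM : 1 <= M.
Hypothesis Hpd : forall y, ex_derive p y.
Hypothesis Hpb : forall y, 0 <= y <= / 6 -> Rabs (p y) <= / 2 * Rpower (INR n) (- a / 2).

Definition Wc y := u_n a n y + v_n a n N p M y.
Let A := Rpower (INR n) (- a).

Lemma A_bounds : 0 < A <= 1.
Proof. unfold A, Rpower. split. apply exp_pos. rewrite <- exp_0.
  assert (1 <= INR n) by (replace 1 with (INR 1) by auto; apply le_INR; lia).
  assert (0 <= ln (INR n)) by (rewrite <- ln_1; apply ln_le; lra).
  destruct (Req_dec (- a * ln (INR n)) 0) as [E|E]. rewrite E; lra.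
  left. apply exp_increasing. nra. Qed.

Lemma hn_HW : h_n a n N p M = HW Wc.
Proof. apply functional_extensionality; intro x; apply functional_extensionality; intro y.
  unfold h_n, HW, Wc. ring. Qed.

Lemma Wc_deriv : forall c, exists l, derivable_pt_lim Wc c l.
Proof. intros c. assert (X : ex_derive Wc c).
  { unfold Wc, v_n, u_n. auto_derive. repeat split; auto. }
  destruct X as [l Hl]. exists l. apply is_derive_Reals. auto. Qed.

Lemma u_ge0 y : 0 <= u_n a n y.
Proof. unfold u_n. apply Rmult_le_pos. left; apply exp_pos. assert (X := COS_bound (2 * PI * y)). lra. Qed.

Lemma Wc_ge_u y : u_n a n y <= Wc y.
Proof. unfold Wc, v_n. assert (X := u_ge0 y). assert (0 < exp (-2 * INR N)) by apply exp_pos.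
  assert (0 <= (p y / M)^2) by apply pow2_ge_0.
  assert (0 <= exp (- 2 * INR N) * (p y / M) ^ 2) by (apply Rmult_le_pos; lra). nra. Qed.

Lemma Wc_ge0 y : 0 <= Wc y.
Proof. assert (X := Wc_ge_u y). assert (Y := u_ge0 y). lra. Qed.

Lemma Wc0 : Wc 0 = 0.
Proof. unfold Wc, v_n, u_n. rewrite Rmult_0_r, cos_0. ring. Qed.

Lemma Wc_mid y : / 6 <= y <= / 2 -> A / 2 <= Wc y.
Proof. intros Hy. assert (X := Wc_ge_u y). unfold u_n in X. fold A in X.
  assert (cos (2 * PI * y) <= cos (PI / 3)).
  { assert (P := PI_gt3). apply cos_decr_1; nra. }
  rewrite cos_PI3 in H. assert (Z := A_bounds). nra. Qed.

Lemma sigma_sq : (/ 2 * Rpower (INR n) (- a / 2)) ^ 2 = / 4 * A.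
Proof. unfold A. simpl. rewrite Rmult_1_r.
  replace (/ 2 * Rpower (INR n) (- a / 2) * (/ 2 * Rpower (INR n) (- a / 2))) with
    (/4 * (Rpower (INR n) (- a / 2) * Rpower (INR n) (- a / 2))) by field.
  rewrite <- Rpower_plus. f_equal. f_equal. field. Qed.

Lemma expN : exp (- 2 * INR N) <= / 3.
Proof. replace (- 2 * INR N) with (- (2 * INR N)) by ring. rewrite exp_Ropp.
  assert (1 <= INR N) by (replace 1 with (INR 1) by auto; apply le_INR; lia).
  assert (X := exp_ineq1 (2 * INR N) ltac:(lra)).
  apply Rinv_le_contravar; lra. Qed.

Lemma Wc_conv c : 0 < c <= / 6 -> 3 / 2 * A ^ 2 * c ^ 2 <= Wc c - Wc ((1 - A) * c).
Proof. intros Hc. assert (HA := A_bounds). assert (HP := PI_gt3). assert (HP4 := PI_4).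
  set (c' := (1 - A) * c).
  assert (Hc' : 0 <= c' <= c) by (unfold c'; nra).
  set (g := fun y => 1 - cos (2 * PI * y)).
  assert (H1 : A * g c <= Wc c) by (apply Wc_ge_u).
  assert (Hg' : 0 <= g c') by (unfold g; assert (X := COS_bound (2 * PI * c')); lra).
  assert (H2 : Wc c' <= A * g c' * (1 + A / 12)).
  { unfold Wc, v_n. unfold u_n at 1 2. fold A. fold (g c').
    assert (E := expN). assert (0 < exp (-2 * INR N)) by apply exp_pos.
    assert (Hq : (p c' / M) ^ 2 <= A / 4).
    { assert (B := Hpb c' ltac:(lra)).
      assert (Rabs (p c' / M) <= / 2 * Rpower (INR n) (- a / 2)).
      { unfold Rdiv. rewrite Rabs_mult. rewrite Rabs_inv. rewrite (Rabs_right M) by lra.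
        assert (0 < / M <= 1). { split. apply Rinv_0_lt_compat; lra. rewrite <- Rinv_1. apply Rinv_le_contravar; lra. }
        assert (0 <= Rabs (p c')) by apply Rabs_pos. nra. }
      rewrite <- (pow2_abs (p c' / M)). assert (S := sigma_sq).
      assert (0 <= Rabs (p c' / M)) by apply Rabs_pos. nra. }
    assert (exp (- 2 * INR N) * (p c' / M) ^ 2 <= A / 12).
    { assert (0 <= (p c' / M)^2) by apply pow2_ge_0. nra. }
    assert (0 <= A * g c') by nra. nra. }
  assert (H3 : 9 / 2 * A * c ^ 2 <= g c - g c').
  { unfold g. replace (1 - cos (2 * PI * c) - (1 - cos (2 * PI * c'))) with (cos (2 * PI * c') - cos (2 * PI * c)) by ring.
    rewrite form2. replace ((2 * PI * c' - 2 * PI * c) / 2) with (- (PI * A * c)) by (unfold c'; field).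
    rewrite sin_neg. replace ((2 * PI * c' + 2 * PI * c) / 2) with (PI * (c + c')) by field.
    assert (Ac : 0 <= A * c <= / 6) by (split; nra).
    assert (PAc : 0 <= PI * (A * c) <= 4 / 6) by (split; nra).
    assert (Pcc : 0 <= PI * (c + c') <= 8 / 6) by (split; nra).
    assert (S1 := sin_ge_half (PI * A * c) ltac:(rewrite Rmult_assoc; lra)).
    assert (S2 := sin_ge_half (PI * (c + c')) ltac:(lra)).
    assert (0 <= PI * A * c / 2) by (apply Rmult_le_pos; nra).
    assert (PI * c / 2 <= PI * (c + c') / 2) by nra.
    assert (PI * A * c / 2 * (PI * c / 2) <= sin (PI * A * c) * sin (PI * (c + c'))).
    { apply Rmult_le_compat; nra. }
    assert (9 / 4 * A * c^2 <= PI * A * c / 2 * (PI * c / 2)).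
    { assert (0 <= A * c^2) by nra. replace (PI * A * c / 2 * (PI * c / 2)) with (PI * PI / 4 * (A * c^2)) by field.
      assert (9 <= PI * PI) by nra. assert (9/4 * (A*c^2) <= PI*PI/4 * (A*c^2)) by (apply Rmult_le_compat_r; lra).
      replace (9/4*A*c^2) with (9/4*(A*c^2)) by ring. lra. }
    lra. }
  assert (H4 : g c' <= 32 * c ^ 2).
  { unfold g. assert (Pc : 0 <= PI * c' <= 4 / 6) by (split; nra).
    assert (X := one_minus_cos_le (2 * PI * c') ltac:(lra)).
    assert (PI * c' <= 4 * c) by nra.
    assert ((2 * PI * c') ^ 2 / 2 = 2 * (PI * c')^2) by field.
    assert ((PI * c')^2 <= (4 * c)^2) by (apply pow_incr; lra). lra. }
  assert (0 <= A * A / 12) by nra.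
  assert (A * g c' * (1 + A / 12) <= A * g c' + A * A / 12 * (32 * c^2)) by nra.
  nra. Qed.

Lemma conv_step x j : OPM Wc x j -> 0 < x j <= / 6 ->
  (x (j+1)%Z - x j) - (x j - x (j-1)%Z) >= A / 2 * x j.
Proof. intros H Hc. assert (HA := A_bounds).
  set (c := x j) in *. set (a0 := x (j-1)%Z) in *. set (b := x (j+1)%Z) in *.
  assert (X := H ((1 - A) * c)). unfold HW in X. fold a0 b c in X.
  assert (C := Wc_conv c Hc).
  assert (E : A * c * ((b - c) - (c - a0)) >= A * c * (A / 2 * c)).
  { assert (I : / 2 * (a0 - (1 - A) * c) ^ 2 + / 2 * ((1 - A) * c - b) ^ 2 - / 2 * (a0 - c) ^ 2 - / 2 * (c - b) ^ 2
       = (A * c * ((b - c) - (c - a0))) + A ^ 2 * c ^ 2) by field.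
    assert (A * c * (A / 2 * c) = / 2 * A ^ 2 * c ^ 2) by field. lra. }
  apply Rle_ge. apply Rge_le in E. apply Rmult_le_reg_l in E; auto. nra. Qed.

End Conc.

Lemma freq_pos x om : has_frequency x om -> 0 < om -> forall k, exists j, (k < j)%Z /\ x j < x (j+1)%Z.
Proof. intros Hf Ho k. apply NNPP; intro Hn.
  assert (Hd : forall j, (k < j)%Z -> x (j+1)%Z <= x j).
  { intros j Hj. apply Rnot_lt_le. intro. apply Hn. exists j; auto. }
  assert (Hb : forall t : nat, x (k + 1 + Z.of_nat t)%Z <= x (k+1)%Z).
  { induction t. simpl. rewrite Z.add_0_r. lra.
    replace (k + 1 + Z.of_nat (S t))%Z with (k + 1 + Z.of_nat t + 1)%Z by lia.
    assert (X := Hd (k + 1 + Z.of_nat t)%Z ltac:(lia)). lra. }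
  destruct (Hf (k+1)%Z om Ho) as [N0 HN0]. specialize (HN0 (S N0) ltac:(lia)).
  unfold R_dist in HN0. assert (0 < INR (S N0)) by (apply lt_0_INR; lia).
  assert ((x (k + 1 + Z.of_nat (S N0))%Z - x (k + 1)%Z) / INR (S N0) <= 0).
  { unfold Rdiv. assert (X := Hb (S N0)). assert (0 < / INR (S N0)) by (apply Rinv_0_lt_compat; auto). nra. }
  apply Rabs_def2 in HN0. lra. Qed.

Lemma mono_range (x : Z -> R) k1 : (forall k, (k1 <= k)%Z -> x k <= x (k+1)%Z) ->
  forall t1 t2 : nat, (t1 <= t2)%nat -> x (k1 + Z.of_nat t1)%Z <= x (k1 + Z.of_nat t2)%Z.
Proof. intros H t1 t2 Ht. induction t2. assert (t1 = 0%nat) by lia. subst. lra.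
  destruct (Nat.eq_dec t1 (S t2)). subst. lra.
  assert (X := IHt2 ltac:(lia)). assert (Y := H (k1 + Z.of_nat t2)%Z ltac:(lia)).
  replace (k1 + Z.of_nat (S t2))%Z with (k1 + Z.of_nat t2 + 1)%Z by lia. lra. Qed.

Lemma mono_range_dec (x : Z -> R) k2 : (forall k, (k <= k2)%Z -> x (k+1)%Z <= x k) ->
  forall t1 t2 : nat, (t1 <= t2)%nat -> x (k2 - Z.of_nat t1)%Z <= x (k2 - Z.of_nat t2)%Z.
Proof. intros H t1 t2 Ht. induction t2. assert (t1 = 0%nat) by lia. subst. lra.
  destruct (Nat.eq_dec t1 (S t2)). subst. lra.
  assert (X := IHt2 ltac:(lia)). assert (Y := H (k2 - Z.of_nat (S t2))%Z ltac:(lia)).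
  replace (k2 - Z.of_nat (S t2) + 1)%Z with (k2 - Z.of_nat t2)%Z in Y by lia. lra. Qed.

Definition zrange (c : Z) (L : nat) : list Z := map (fun t => (c - Z.of_nat L + Z.of_nat t)%Z) (seq 0 (2 * L + 1)).

Lemma in_zrange c L s : (Z.abs (s - c) <= Z.of_nat L)%Z -> In s (zrange c L).
Proof. intros H. unfold zrange. apply in_map_iff. exists (Z.to_nat (s - c + Z.of_nat L)). split. lia.
  apply in_seq. lia. Qed.

Lemma center (S : list Z) (P : Z -> Prop) (L : nat) :
  (forall u v, P u -> P v -> (Z.abs (u - v) <= Z.of_nat L)%Z) ->
  exists c, forall s, In s S -> P s -> In s (zrange c L).
Proof. intros H. destruct (classic (exists s, In s S /\ P s)) as [[s0 [_ H0]]|Hn].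
  - exists s0. intros s _ Hs. apply in_zrange. auto.
  - exists 0%Z. intros s Hs Hp. exfalso. apply Hn. eauto. Qed.

Lemma count4 (S : list Z) (P1 P2 P3 P4 : Z -> Prop) (L : nat) : NoDup S ->
  (forall s, In s S -> P1 s \/ P2 s \/ P3 s \/ P4 s) ->
  (forall u v, P1 u -> P1 v -> (Z.abs (u - v) <= Z.of_nat L)%Z) ->
  (forall u v, P2 u -> P2 v -> (Z.abs (u - v) <= Z.of_nat L)%Z) ->
  (forall u v, P3 u -> P3 v -> (Z.abs (u - v) <= Z.of_nat L)%Z) ->
  (forall u v, P4 u -> P4 v -> (Z.abs (u - v) <= Z.of_nat L)%Z) ->
  (length S <= 4 * (2 * L + 1))%nat.
Proof. intros HN HS H1 H2 H3 H4.
  destruct (center S P1 L H1) as [c1 C1]. destruct (center S P2 L H2) as [c2 C2].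
  destruct (center S P3 L H3) as [c3 C3]. destruct (center S P4 L H4) as [c4 C4].
  assert (I : incl S (zrange c1 L ++ zrange c2 L ++ zrange c3 L ++ zrange c4 L)).
  { intros s Hs. rewrite !in_app_iff. destruct (HS s Hs) as [X|[X|[X|X]]]; auto. }
  assert (Hl := NoDup_incl_length HN I). rewrite !app_length in Hl. unfold zrange in Hl.
  rewrite !map_length, !seq_length in Hl. lia. Qed.

Lemma INR_toZ z : (0 <= z)%Z -> INR (Z.to_nat z) = IZR z.
Proof. intros H. rewrite INR_IZR_INZ. rewrite Z2Nat.id; auto. Qed.

Lemma Rpower_ge1 n b : (0 < n)%nat -> 0 <= b -> 1 <= Rpower (INR n) b.
Proof. intros Hn Hb. assert (1 <= INR n) by (replace 1 with (INR 1) by auto; apply le_INR; lia).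
  rewrite <- (Rpower_O (INR n)) by lra. apply Rle_Rpower; lra. Qed.

Section Core.
Variables (a delta : R) (n N : nat) (p : R -> R) (M : R) (x : Z -> R) (om : R) (Sl : list Z).
Hypothesis Ha : 0 < a.
Hypothesis Hdel : 0 < delta.
Hypothesis Hn : (0 < n)%nat.
Hypothesis HN : (1 <= N)%nat.
Hypothesis HM : 1 <= M.
Hypothesis Hpd : forall y, ex_derive p y.
Hypothesis Hpb : forall y, 0 <= y <= / 6 -> Rabs (p y) <= / 2 * Rpower (INR n) (- a / 2).
Hypothesis Hx : minimal_config (HW (Wc a n N p M)) x.
Hypothesis Hf : has_frequency x om.
Hypothesis Hom : 0 < om.
Hypothesis HJ : forall i, In i Sl -> in_J a delta n (x i).

Let W := Wc a n N p M.
Let A := Rpower (INR n) (- a).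
Let Q := Rpower (INR n) (a / 2).
Let P := Rpower (INR n) (a / 2 + delta / 2).
Let HWd := Wc_deriv a n N p M Hpd.
Let Hpos := freq_pos x om Hf Hom.

Lemma AQ : A * (Q * Q) = 1.
Proof. unfold A, Q. rewrite <- !Rpower_plus. replace (- a + (a/2 + a/2)) with 0 by field.
  apply Rpower_O. apply lt_0_INR; lia. Qed.

Let m0 := Z.to_nat (up (3 * Q + 1)).
Lemma m0_bounds : 3 * Q + 1 < INR m0 <= 3 * Q + 2.
Proof. assert (Q1 : 1 <= Q) by (apply Rpower_ge1; [lia|lra]). destruct (archimed (3 * Q + 1)) as [H1 H2].
  unfold m0. rewrite INR_toZ. lra. apply le_IZR. lra. Qed.

Lemma m0_ok : (1 <= m0)%nat /\ 2 <= A / 2 * INR m0 * (INR m0 - 1) / 2.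
Proof. assert (B := m0_bounds). assert (Q1 : 1 <= Q) by (apply Rpower_ge1; [lia|lra]). assert (E := AQ).
  assert (HA := A_bounds a n N Ha Hn HN). fold A in HA. split.
  - assert (1 < INR m0) by lra. assert (INR 0 < INR m0) by (simpl; lra). apply INR_lt in H0. lia.
  - assert (INR m0 * (INR m0 - 1) >= 9 * (Q * Q)) by nra.
    assert (A * (INR m0 * (INR m0 - 1)) >= 9) by nra. nra. Qed.

Lemma Hin u : In u Sl -> exp (- P) <= x u <= / 2.
Proof. intros H. apply HJ in H. exact H. Qed.

Let D := (P + 1) * INR m0 + 1 + Q * Q.

Lemma class1 u v : In u Sl -> In v Sl -> x u <= x (u+1)%Z -> x v <= / 6 -> (u < v)%Z -> IZR (v - u) <= D.
Proof. intros Hu Hv Hm Hv6 Huv.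
  assert (Hmono := mono_fwd W HWd x Hx Hpos u Hm).
  set (K := Z.to_nat (v - u)). assert (EK : v = (u + Z.of_nat K)%Z) by (unfold K; lia).
  assert (MR := mono_range x u Hmono).
  destruct (Hin u Hu) as [Hu1 Hu2]. assert (0 < exp (- P)) by apply exp_pos.
  assert (Hz : forall t, (t <= K)%nat -> exp (- P) <= x (u + Z.of_nat t)%Z <= / 6).
  { intros t Ht. split. assert (X := MR 0%nat t ltac:(lia)). simpl in X. rewrite Z.add_0_r in X. lra.
    assert (X := MR t K Ht). rewrite <- EK in X. lra. }
  destruct m0_ok as [Hm1 Hm2].
  assert (HA := A_bounds a n N Ha Hn HN). fold A in HA.
  assert (Hh := hyper (fun t => x (u + Z.of_nat t)%Z) (A / 2) K ltac:(lra)).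
  assert (Hh' : INR K < (P + 1) * INR m0).
  { apply Hh; auto.
    - intros t Ht1 Ht2. cbv beta.
      assert (Y := conv_step a n N p M Ha Hn HN HM Hpb x (u + Z.of_nat t)%Z (gOPM W x Hx _)
        ltac:(assert (X := Hz t ltac:(lia)); lra)).
      replace (u + Z.of_nat (S t))%Z with (u + Z.of_nat t + 1)%Z by lia.
      replace (u + Z.of_nat (t - 1))%Z with (u + Z.of_nat t - 1)%Z by lia. fold A in Y. lra.
    - cbv beta. replace (u + Z.of_nat 0)%Z with u by lia. lra.
    - cbv beta. replace (u + Z.of_nat 0)%Z with u by lia. replace (u + Z.of_nat 1)%Z with (u+1)%Z by lia. auto.
    - intros t Ht. assert (X := Hz t Ht). lra. }
  replace (IZR (v - u)) with (INR K) by (unfold K; apply INR_toZ; lia).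
  unfold D. assert (Q*Q >= 0) by nra. lra. Qed.

Lemma dec_all v : x (v+1)%Z < x v -> forall k, (k <= v)%Z -> x (k+1)%Z <= x k.
Proof. intros H k Hk. destruct (Rle_or_lt (x (k+1)%Z) (x k)) as [|Hlt]; auto.
  exfalso. assert (X := mono_fwd W HWd x Hx Hpos k ltac:(lra) v Hk). lra. Qed.

Lemma class3 u v : In u Sl -> In v Sl -> x (v+1)%Z < x v -> x u <= / 6 -> (u < v)%Z -> IZR (v - u) <= D.
Proof. intros Hu Hv Hm Hu6 Huv.
  assert (Hdec := dec_all v Hm).
  set (K := Z.to_nat (v - u)). assert (EK : u = (v - Z.of_nat K)%Z) by (unfold K; lia).
  assert (MR := mono_range_dec x v Hdec).
  destruct (Hin v Hv) as [Hv1 Hv2]. assert (0 < exp (- P)) by apply exp_pos.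
  assert (Hz : forall t, (t <= K)%nat -> exp (- P) <= x (v - Z.of_nat t)%Z <= / 6).
  { intros t Ht. split. assert (X := MR 0%nat t ltac:(lia)). simpl in X. rewrite Z.sub_0_r in X. lra.
    assert (X := MR t K Ht). rewrite <- EK in X. lra. }
  destruct m0_ok as [Hm1 Hm2].
  assert (HA := A_bounds a n N Ha Hn HN). fold A in HA.
  assert (Hh := hyper (fun t => x (v - Z.of_nat t)%Z) (A / 2) K ltac:(lra)).
  assert (Hh' : INR K < (P + 1) * INR m0).
  { apply Hh; auto.
    - intros t Ht1 Ht2. cbv beta.
      assert (Y := conv_step a n N p M Ha Hn HN HM Hpb x (v - Z.of_nat t)%Z (gOPM W x Hx _)
        ltac:(assert (X := Hz t ltac:(lia)); lra)).
      replace (v - Z.of_nat (S t))%Z with (v - Z.of_nat t - 1)%Z by lia.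
      replace (v - Z.of_nat (t - 1))%Z with (v - Z.of_nat t + 1)%Z by lia. fold A in Y. lra.
    - cbv beta. replace (v - Z.of_nat 0)%Z with v by lia. lra.
    - cbv beta. replace (v - Z.of_nat 0)%Z with v by lia. assert (X := Hdec (v - 1)%Z ltac:(lia)).
      replace (v - 1 + 1)%Z with v in X by lia. replace (v - Z.of_nat 1)%Z with (v-1)%Z by lia. auto.
    - intros t Ht. assert (X0 := Hz t Ht). lra. }
  replace (IZR (v - u)) with (INR K) by (unfold K; apply INR_toZ; lia).
  unfold D. assert (Q*Q >= 0) by nra. lra. Qed.

Lemma run_bound u K : (forall s, (s <= K)%nat -> / 6 <= x (u + Z.of_nat s)%Z <= / 2) -> INR K <= D.
Proof. intros Hs.
  assert (HA := A_bounds a n N Ha Hn HN). fold A in HA.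
  assert (X := run_len W x (A / 2) (/ 6) u K Hx (Wc_ge0 a n N p M) (Wc0 a n N p M) ltac:(lra)
     (Wc_mid a n N p M Ha Hn HN) ltac:(lra) Hs).
  assert (E := AQ). assert (B := m0_bounds).
  assert (P1 : 1 <= P) by (apply Rpower_ge1; [lia|lra]).
  assert (INR K * A <= A + / 2) by lra.
  assert (INR K * A * (Q * Q) <= (A + /2) * (Q * Q)) by (apply Rmult_le_compat_r; nra).
  replace (INR K * A * (Q * Q)) with (INR K) in H0 by (rewrite Rmult_assoc, E; ring).
  assert ((A + / 2) * (Q * Q) = 1 + / 2 * (Q * Q)) by (rewrite Rmult_plus_distr_r, E; ring).
  unfold D. assert (0 <= INR m0) by apply pos_INR. assert (Q*Q >= 0) by nra. nra. Qed.

Lemma class2 u v : In u Sl -> In v Sl -> x u <= x (u+1)%Z -> / 6 <= x u -> (u < v)%Z -> IZR (v - u) <= D.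
Proof. intros Hu Hv Hm Hu6 Huv.
  assert (Hmono := mono_fwd W HWd x Hx Hpos u Hm).
  set (K := Z.to_nat (v - u)). assert (EK : v = (u + Z.of_nat K)%Z) by (unfold K; lia).
  assert (MR := mono_range x u Hmono). destruct (Hin v Hv).
  replace (IZR (v - u)) with (INR K) by (unfold K; apply INR_toZ; lia).
  apply (run_bound u). intros s Hs. split.
  assert (X := MR 0%nat s ltac:(lia)). simpl in X. rewrite Z.add_0_r in X. lra.
  assert (X := MR s K Hs). rewrite <- EK in X. lra. Qed.

Lemma class4 u v : In u Sl -> In v Sl -> x (v+1)%Z < x v -> / 6 <= x v -> (u < v)%Z -> IZR (v - u) <= D.
Proof. intros Hu Hv Hm Hv6 Huv.
  assert (Hdec := dec_all v Hm).
  set (K := Z.to_nat (v - u)). assert (EK : u = (v - Z.of_nat K)%Z) by (unfold K; lia).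
  assert (MR := mono_range_dec x v Hdec). destruct (Hin u Hu).
  replace (IZR (v - u)) with (INR K) by (unfold K; apply INR_toZ; lia).
  apply (run_bound u). intros s Hs.
  replace (u + Z.of_nat s)%Z with (v - Z.of_nat (K - s)%nat)%Z by lia. split.
  assert (X := MR 0%nat (K - s)%nat ltac:(lia)). simpl in X. rewrite Z.sub_0_r in X. lra.
  assert (X := MR (K - s)%nat K ltac:(lia)). rewrite <- EK in X. lra. Qed.


Lemma D_nonneg : 0 <= D.
Proof. unfold D. assert (P1 : 1 <= P) by (apply Rpower_ge1; [lia|lra]). assert (0 <= INR m0) by apply pos_INR.
  assert (Q*Q >= 0) by nra. nra. Qed.

Lemma diam_of (Pc : Z -> Prop) : (forall u v, Pc u -> Pc v -> (u < v)%Z -> IZR (v - u) <= D) ->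
  forall u v, Pc u -> Pc v -> (Z.abs (u - v) <= Z.of_nat (Z.to_nat (up D)))%Z.
Proof. intros H u v Hu Hv. destruct (archimed D) as [H1 H2]. assert (DN := D_nonneg).
  assert (0 <= up D)%Z by (apply le_IZR; lra).
  rewrite Z2Nat.id by auto.
  destruct (Z.lt_trichotomy u v) as [Hl|[He|Hl]].
  - assert (X := H u v Hu Hv Hl). assert (v - u < up D)%Z by (apply lt_IZR; lra). lia.
  - subst. lia.
  - assert (X := H v u Hv Hu Hl). assert (u - v < up D)%Z by (apply lt_IZR; lra). lia. Qed.

Lemma main_core : NoDup Sl -> INR (length Sl) <= 110 * Rpower (INR n) (a + delta / 2).
Proof. intros HND.
  set (P1 := fun s => In s Sl /\ x s <= x (s+1)%Z /\ x s <= / 6).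
  set (P2 := fun s => In s Sl /\ x s <= x (s+1)%Z /\ / 6 <= x s).
  set (P3 := fun s => In s Sl /\ x (s+1)%Z < x s /\ x s <= / 6).
  set (P4 := fun s => In s Sl /\ x (s+1)%Z < x s /\ / 6 <= x s).
  assert (Hc := count4 Sl P1 P2 P3 P4 (Z.to_nat (up D)) HND).
  assert (Hlen : (length Sl <= 4 * (2 * Z.to_nat (up D) + 1))%nat).
  { apply Hc.
    - intros s Hs. unfold P1, P2, P3, P4. destruct (Rle_or_lt (x s) (x (s+1)%Z)); destruct (Rle_or_lt (x s) (/6)); intuition lra.
    - apply diam_of. intros u v [Hu [Hu1 Hu2]] [Hv [Hv1 Hv2]] Huv. apply class1; auto.
    - apply diam_of. intros u v [Hu [Hu1 Hu2]] [Hv [Hv1 Hv2]] Huv. apply class2; auto.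
    - apply diam_of. intros u v [Hu [Hu1 Hu2]] [Hv [Hv1 Hv2]] Huv. apply class3; auto.
    - apply diam_of. intros u v [Hu [Hu1 Hu2]] [Hv [Hv1 Hv2]] Huv. apply class4; auto. }
  apply le_INR in Hlen. rewrite mult_INR, plus_INR, mult_INR in Hlen. simpl in Hlen.
  destruct (archimed D) as [H1 H2]. assert (DN := D_nonneg).
  assert (0 <= up D)%Z by (apply le_IZR; lra).
  rewrite INR_toZ in Hlen by auto.
  set (R0 := Rpower (INR n) (a + delta / 2)).
  assert (PQ : P * Q = R0). { unfold P, Q, R0. rewrite <- Rpower_plus. f_equal. field. }
  assert (QQ : Q * Q <= R0). { unfold Q, R0. rewrite <- Rpower_plus. apply Rle_Rpower.
     replace 1 with (INR 1) by auto; apply le_INR; lia. lra. }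
  assert (Q1 : 1 <= Q) by (apply Rpower_ge1; [lia|lra]).
  assert (Pg1 : 1 <= P) by (apply Rpower_ge1; [lia|lra]).
  assert (B := m0_bounds).
  assert (Dle : D <= 12 * R0).
  { unfold D. assert ((P + 1) * INR m0 <= (P + 1) * (3 * Q + 2)) by (apply Rmult_le_compat_l; lra).
    assert ((P + 1) * (3 * Q + 2) <= 10 * (P * Q)) by nra. assert (1 <= R0) by nra. lra. }
  assert (1 <= R0) by nra. lra. Qed.

End Core.


Theorem lemmaB2 (a : R) (ha : 0 < a) :
  exists delta0 : R, 0 < delta0 /\
  forall delta : R, 0 < delta < delta0 ->
  forall k : nat, a / delta < INR k ->
  forall C : R, 0 < C ->
  forall (l r : nat -> R) (N : nat -> nat) (p : nat -> R -> R) (M : nat -> R),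
    (forall n : nat, (0 < n)%nat -> admissible a k C n (l n) (r n) (N n) (p n) (M n)) ->
  exists C' : R, 0 < C' /\
  forall n : nat, (0 < n)%nat ->
  forall (x : Z -> R) (omega : R),
    minimal_config (h_n a n (N n) (p n) (M n)) x ->
    has_frequency x omega -> 0 < omega ->
    forall S : list Z, NoDup S -> (forall i, In i S -> in_J a delta n (x i)) ->
    INR (length S) <= C' * Rpower (INR n) (a + delta / 2).
Proof.
  exists 1. split. lra.
  intros delta Hd k Hk C HC l r N p M Hadm. exists 110. split. lra.
  intros n Hn x omega Hmin Hfreq Hom S HND HS.
  destruct (Hadm n Hn) as [Hl1 [Hlr [Hr [HC1 [HC2 [Htrig [HN1 [HN2 [Hmax [Hex [HM1 Hpb]]]]]]]]]]].
  assert (HNn : (1 <= N n)%nat).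
  { destruct (N n) eqn:E. 2: lia. exfalso. simpl in HN1.
    assert (0 < / C) by (apply Rinv_0_lt_compat; auto).
    assert (0 < Rpower (INR n) (a / 2 + a / (2 * INR k))) by (unfold Rpower; apply exp_pos). nra. }
  rewrite hn_HW in Hmin.
  apply (main_core a delta n (N n) (p n) (M n) x omega S); auto.
  - lra.
  - apply (trig_ex_derive _ _ Htrig).
  - intros y Hy. apply Hpb. lra. intros [Hy1 _]. lra.
Qed.
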